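(* Over a field of characteristic $0$, write $[a,b]=ab-ba$ and $\{a,b\}=ab+ba$. An algebra is left-symmetric and satisfies $(ab)c-(ba)c-(ac)b+(ca)b+(bc)a-(cb)a=0$ if and only if, in terms of $[\cdot,\cdot]$ and $\{\cdot,\cdot\}$, it satisfies \[ [[a,b],c]+[[b,c],a]+[[c,a],b]=0, \] \[ \{\{a,b\},c\}=-\{[a,b],c\}-2\{[a,c],b\}+[\{a,b\},c]-[[a,c],b]+\{a,\{b,c\}\}-\{a,[b,c]\}+[a,\{b,c\}], \] and \[ \{[a,b],c\}+\{[b,c],a\}+\{[c,a],b\}=0. \]
   Context: A left-symmetric algebra is an algebra whose associator $(a,b,c)=(ab)c-a(bc)$ satisfies $(a,b,c)=(b,a,c)$. The statement is the polarization (Markl–Remm) of this variety. *)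

(* Defs.v *)
From mathcomp Require Import all_boot all_order all_algebra.
Set Implicit Arguments. Unset Strict Implicit. Unset Printing Implicit Defensive.
Import GRing.Theory.
Local Open Scope ring_scope.

Section NonAssoc.
Variables (K : fieldType) (V : lmodType K) (mul : V -> V -> V).

Definition bilinear_mul : Prop :=
  (forall k x y z, mul (k *: x + y) z = k *: mul x z + mul y z) /\
  (forall k x y z, mul z (k *: x + y) = k *: mul z x + mul z y).

Definition associator (a b c : V) : V := mul (mul a b) c - mul a (mul b c).

Definition left_symmetric : Prop :=
  forall a b c, associator a b c = associator b a c.

Definition lbr (a b : V) : V := mul a b - mul b a.
Definition jbr (a b : V) : V := mul a b + mul b a.
End NonAssoc.

(* Main.v *)
Require Import Defs.
From mathcomp Require Import all_boot all_order all_algebra.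
From mathcomp Require Import ring.
Import GRing.Theory.
Set Implicit Arguments. Unset Strict Implicit.
Local Open Scope ring_scope.

Section Helpers.
Variables (K : fieldType) (V : lmodType K).

Fixpoint ev (ms : seq V) (cs : seq K) : V :=
  match ms, cs with
  | m :: ms', c :: cs' => c *: m + ev ms' cs'
  | _, _ => 0
  end.

Fixpoint addc (cs ds : seq K) : seq K :=
  match cs, ds with
  | c :: cs', d :: ds' => (c + d) :: addc cs' ds'
  | [::], _ => ds
  | _, [::] => cs
  end.

Lemma evD ms cs ds : ev ms (addc cs ds) = ev ms cs + ev ms ds.
Proof.
elim: ms cs ds => [|m ms IH] [|c cs] [|d ds] /=; rewrite ?addr0 ?add0r //.
by rewrite IH scalerDl addrACA.
Qed.

Lemma evN ms cs : ev ms (map (fun c => - c) cs) = - ev ms cs.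
Proof.
elim: ms cs => [|m ms IH] [|c cs] /=; rewrite ?oppr0 //.
by rewrite IH scaleNr opprD.
Qed.

Lemma evZ k ms cs : ev ms (map (fun c => k * c) cs) = k *: ev ms cs.
Proof.
elim: ms cs => [|m ms IH] [|c cs] /=; rewrite ?scaler0 //.
by rewrite IH scalerDr scalerA.
Qed.

Lemma ev_nseq0 ms n : ev ms (nseq n 0) = 0.
Proof.
elim: ms n => [|m ms IH] [|n] //=.
by rewrite IH scale0r addr0.
Qed.

Lemma cons_eq (a b : K) s t : a = b -> s = t -> a :: s = b :: t.
Proof. by move=> -> ->. Qed.

End Helpers.

Section Bil.
Variables (K : fieldType) (V : lmodType K) (mul : V -> V -> V).
Variable hmul : bilinear_mul mul.

Lemma mul0l z : mul 0 z = 0.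
Proof.
have := hmul.1 1 0 0 z; rewrite !scale1r addr0.
by move/eqP; rewrite -subr_eq0 opprD addrA subrr add0r oppr_eq0 => /eqP.
Qed.
Lemma mul0r z : mul z 0 = 0.
Proof.
have := hmul.2 1 0 0 z; rewrite !scale1r addr0.
by move/eqP; rewrite -subr_eq0 opprD addrA subrr add0r oppr_eq0 => /eqP.
Qed.
Lemma mDl x y z : mul (x + y) z = mul x z + mul y z.
Proof. by have := hmul.1 1 x y z; rewrite !scale1r. Qed.
Lemma mDr x y z : mul z (x + y) = mul z x + mul z y.
Proof. by have := hmul.2 1 x y z; rewrite !scale1r. Qed.
Lemma mZl k x z : mul (k *: x) z = k *: mul x z.
Proof. by have := hmul.1 k x 0 z; rewrite !addr0 mul0l addr0. Qed.
Lemma mZr k x z : mul z (k *: x) = k *: mul z x.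
Proof. by have := hmul.2 k x 0 z; rewrite !addr0 mul0r addr0. Qed.
Lemma mNl x z : mul (- x) z = - mul x z.
Proof. by rewrite -scaleN1r mZl scaleN1r. Qed.
Lemma mNr x z : mul z (- x) = - mul z x.
Proof. by rewrite -scaleN1r mZr scaleN1r. Qed.
Lemma mBl x y z : mul (x - y) z = mul x z - mul y z.
Proof. by rewrite mDl mNl. Qed.
Lemma mBr x y z : mul z (x - y) = mul z x - mul z y.
Proof. by rewrite mDr mNr. Qed.
End Bil.

Ltac solve_lin mul a b c hDl hDr hBl hBr hNl hNr hZl hZr :=
  rewrite /lbr /jbr /associator ?(hDl, hDr, hBl, hBr, hNl, hNr, hZl, hZr);
  let ms := fresh "ms" in
  pose ms := [:: mul (mul a b) c; mul (mul a c) b; mul (mul b a) c; mul (mul b c) a; mul (mul c a) b; mul (mul c b) a; mul a (mul b c); mul a (mul c b); mul b (mul a c); mul b (mul c a); mul c (mul a b); mul c (mul b a)];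
  rewrite [mul (mul a b) c](_ : _ = ev ms [:: 1; 0; 0; 0; 0; 0; 0; 0; 0; 0; 0; 0]); [ | by rewrite /ms /= scale1r !scale0r !(addr0, add0r)];
  rewrite [mul (mul a c) b](_ : _ = ev ms [:: 0; 1; 0; 0; 0; 0; 0; 0; 0; 0; 0; 0]); [ | by rewrite /ms /= scale1r !scale0r !(addr0, add0r)];
  rewrite [mul (mul b a) c](_ : _ = ev ms [:: 0; 0; 1; 0; 0; 0; 0; 0; 0; 0; 0; 0]); [ | by rewrite /ms /= scale1r !scale0r !(addr0, add0r)];
  rewrite [mul (mul b c) a](_ : _ = ev ms [:: 0; 0; 0; 1; 0; 0; 0; 0; 0; 0; 0; 0]); [ | by rewrite /ms /= scale1r !scale0r !(addr0, add0r)];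
  rewrite [mul (mul c a) b](_ : _ = ev ms [:: 0; 0; 0; 0; 1; 0; 0; 0; 0; 0; 0; 0]); [ | by rewrite /ms /= scale1r !scale0r !(addr0, add0r)];
  rewrite [mul (mul c b) a](_ : _ = ev ms [:: 0; 0; 0; 0; 0; 1; 0; 0; 0; 0; 0; 0]); [ | by rewrite /ms /= scale1r !scale0r !(addr0, add0r)];
  rewrite [mul a (mul b c)](_ : _ = ev ms [:: 0; 0; 0; 0; 0; 0; 1; 0; 0; 0; 0; 0]); [ | by rewrite /ms /= scale1r !scale0r !(addr0, add0r)];
  rewrite [mul a (mul c b)](_ : _ = ev ms [:: 0; 0; 0; 0; 0; 0; 0; 1; 0; 0; 0; 0]); [ | by rewrite /ms /= scale1r !scale0r !(addr0, add0r)];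
  rewrite [mul b (mul a c)](_ : _ = ev ms [:: 0; 0; 0; 0; 0; 0; 0; 0; 1; 0; 0; 0]); [ | by rewrite /ms /= scale1r !scale0r !(addr0, add0r)];
  rewrite [mul b (mul c a)](_ : _ = ev ms [:: 0; 0; 0; 0; 0; 0; 0; 0; 0; 1; 0; 0]); [ | by rewrite /ms /= scale1r !scale0r !(addr0, add0r)];
  rewrite [mul c (mul a b)](_ : _ = ev ms [:: 0; 0; 0; 0; 0; 0; 0; 0; 0; 0; 1; 0]); [ | by rewrite /ms /= scale1r !scale0r !(addr0, add0r)];
  rewrite [mul c (mul b a)](_ : _ = ev ms [:: 0; 0; 0; 0; 0; 0; 0; 0; 0; 0; 0; 1]); [ | by rewrite /ms /= scale1r !scale0r !(addr0, add0r)];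
  rewrite -?(ev_nseq0 ms 12);
  repeat first [rewrite -evD | rewrite -evN | rewrite -evZ];
  congr (ev ms _); rewrite /=;
  repeat (apply: cons_eq; [ring | ]); reflexivity.

Theorem mainTheorem14 (K : fieldType) (charK0 : [pchar K] =i pred0)
    (V : lmodType K) (mul : V -> V -> V) (hmul : bilinear_mul mul) :
  (left_symmetric mul /\
   (forall a b c : V,
      mul (mul a b) c - mul (mul b a) c - mul (mul a c) b + mul (mul c a) b
      + mul (mul b c) a - mul (mul c b) a = 0))
  <->
  ((forall a b c : V,
      lbr mul (lbr mul a b) c + lbr mul (lbr mul b c) a
      + lbr mul (lbr mul c a) b = 0) /\
   (forall a b c : V,
      jbr mul (jbr mul a b) c =
        - jbr mul (lbr mul a b) c - 2%:R *: jbr mul (lbr mul a c) b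
        + lbr mul (jbr mul a b) c - lbr mul (lbr mul a c) b
        + jbr mul a (jbr mul b c) - jbr mul a (lbr mul b c)
        + lbr mul a (jbr mul b c)) /\
   (forall a b c : V,
      jbr mul (lbr mul a b) c + jbr mul (lbr mul b c) a
      + jbr mul (lbr mul c a) b = 0)).
Proof.
have hDl := mDl hmul; have hDr := mDr hmul; have hBl := mBl hmul; have hBr := mBr hmul.
have hNl := mNl hmul; have hNr := mNr hmul; have hZl := mZl hmul; have hZr := mZr hmul.
have nz : forall n, (n.+1)%:R != 0 :> K.
  by move=> n; have /pcharf0P -> := charK0.
split.
- move=> [hLS hP].
  have ls0 : forall x y z, associator mul x y z - associator mul y x z = 0.
    by move=> x y z; rewrite hLS subrr.
  split; [|split]; move=> a b c.
  + rewrite (_ : _ + _ = (associator mul a b c - associator mul b a c)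
        - (associator mul a c b - associator mul c a b)
        + (associator mul b c a - associator mul c b a)); last first.
      solve_lin mul a b c hDl hDr hBl hBr hNl hNr hZl hZr.
    by rewrite !ls0 subrr addr0.
  + apply/eqP; rewrite -subr_eq0; apply/eqP.
    rewrite [X in X = 0](_ : _ = (associator mul a b c - associator mul b a c)
        + 3%:R *: (associator mul a c b - associator mul c a b)
        + (associator mul b c a - associator mul c b a)); last first.
      solve_lin mul a b c hDl hDr hBl hBr hNl hNr hZl hZr.
    by rewrite !ls0 scaler0 !addr0.
  + rewrite (_ : _ + _ = - (associator mul a b c - associator mul b a c)
        + (associator mul a c b - associator mul c a b)
        - (associator mul b c a - associator mul c b a)
        + 2%:R *: (mul (mul a b) c - mul (mul b a) c - mul (mul a c) b + mul (mul c a) b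
      + mul (mul b c) a - mul (mul c b) a)); last first.
      solve_lin mul a b c hDl hDr hBl hBr hNl hNr hZl hZr.
    by rewrite !ls0 hP !(scaler0, oppr0, addr0, subr0).
- move=> [hJ [hQ hS]].
  split.
  + move=> a b c; apply/eqP; rewrite -subr_eq0.
    have E : 4%:R *: (associator mul a b c - associator mul b a c) =
      (lbr mul (lbr mul a b) c + lbr mul (lbr mul b c) a + lbr mul (lbr mul c a) b)
      + (jbr mul (jbr mul a c) b -
        (- jbr mul (lbr mul a c) b - 2%:R *: jbr mul (lbr mul a b) c
        + lbr mul (jbr mul a c) b - lbr mul (lbr mul a b) c
        + jbr mul a (jbr mul c b) - jbr mul a (lbr mul c b)
        + lbr mul a (jbr mul c b))).
      solve_lin mul a b c hDl hDr hBl hBr hNl hNr hZl hZr.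
    move: E; rewrite hJ (hQ a c b) subrr addr0 => /eqP.
    by rewrite scaler_eq0 (negbTE (nz 3)).
  + move=> a b c; apply/eqP.
    have E : 2%:R *: (mul (mul a b) c - mul (mul b a) c - mul (mul a c) b + mul (mul c a) b
      + mul (mul b c) a - mul (mul c b) a) =
      (lbr mul (lbr mul a b) c + lbr mul (lbr mul b c) a + lbr mul (lbr mul c a) b)
      + (jbr mul (lbr mul a b) c + jbr mul (lbr mul b c) a + jbr mul (lbr mul c a) b).
      solve_lin mul a b c hDl hDr hBl hBr hNl hNr hZl hZr.
    move: E; rewrite hJ hS addr0 => /eqP.
    by rewrite scaler_eq0 (negbTE (nz 1)).
Qed.
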